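(* Let $g,h$ be relatively prime divisors of $N$ and $\chi\in X_N$, $\psi=\theta\chi^{-1}$. Then the eigensymbol $\alpha^{g,h}_{\chi,\psi}$ is zero unless $f_\chi$ divides $N/g$ and $f_\psi$ divides $N/h$.
   Context: $p$ is an odd prime, $M$ a positive integer with $p\nmid M\varphi(M)$, $N=M$ or $Mp$, $N>1$, $\Delta=(\mathbb{Z}/N\mathbb{Z})^\times/\langle-1\rangle$. $H$ is a space of level $N$ modular symbols: a $\mathbb{Z}_p[\Delta]$-module spanned by symbols $[u:v]$ ($u,v\in\mathbb{Z}/N\mathbb{Z}$ generating the unit ideal) satisfying $[u:v]=[-u:-v]=-[-v:u]$, $[u:v]=[u:u+v]+[u+v:v]$, $\langle a\rangle[u:v]=[au:av]$. $\theta:\Delta\to\mathbb{C}_p^\times$ is a character, $\mathcal{O}=\mathbb{Z}_p[\mu_{\varphi(N)}]$, $X_N=\mathrm{Hom}((\mathbb{Z}/N\mathbb{Z})^\times,\mathcal{O}^\times)$, $e_\theta=\frac1{\varphi(N)}\sum_a\theta^{-1}(a)\langle a\rangle$, $H^\theta=e_\theta(H\otimes_{\mathbb{Z}_p}\mathcal{O})$. $\alpha^{g,h}_{\chi,\psi}=\frac{1}{\varphi(N)^2}\sum_{a,b\in(\mathbb{Z}/N\mathbb{Z})^\times}\chi^{-1}(a)\psi^{-1}(b)[ga:hb]$. $f_\chi$ denotes the conductor of $\chi$. *)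

(* Defs.v *)
From HB Require Import structures.
From mathcomp Require Import all_boot all_order all_algebra all_fingroup.
Set Implicit Arguments. Unset Strict Implicit. Unset Printing Implicit Defensive.
Import GRing.Theory.
Local Open Scope ring_scope.

(* u, v in Z/NZ generate the unit ideal: gcd(u, v, N) = 1 (on representatives). *)
Definition unimod (N : nat) (u v : 'Z_N) : bool :=
  gcdn (gcdn (val u) (val v)) N == 1%N.

Definition char_trivial_mod (N : nat) (O : nzRingType) (chi : {unit 'Z_N} -> O)
  (d : nat) : bool :=
  [forall a : {unit 'Z_N}, ((val (val a) %% d) == (1 %% d))%N ==> (chi a == chi 1%g)].

(* conductor f_chi: least positive divisor d of N such that chi factors through
   (Z/dZ)^x, i.e. is trivial on the units congruent to 1 mod d. *)
Definition conductor (N : nat) (O : nzRingType) (chi : {unit 'Z_N} -> O) : nat :=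
  \big[minn/N]_(d < N.+1 | (0 < (d : nat))%N && ((d : nat) %| N)%N
                          && char_trivial_mod chi d) (d : nat).

Definition is_character (N : nat) (O : unitRingType) (chi : {unit 'Z_N} -> O) : Prop :=
  (forall a, chi a \is a GRing.unit) /\
  (forall a b : {unit 'Z_N}, chi (a * b)%g = chi a * chi b).

Definition alpha (N : nat) (O : unitRingType) (V : lmodType O)
  (sym : 'Z_N -> 'Z_N -> V) (g h : nat) (chi psi : {unit 'Z_N} -> O) : V :=
  ((totient N)%:R ^+ 2)^-1 *:
    \sum_(a : {unit 'Z_N}) \sum_(b : {unit 'Z_N})
       (((chi a)^-1 * (psi b)^-1) *: sym (g%:R * val a) (h%:R * val b)).

(* Main.v *)
Require Import Defs.
From HB Require Import structures.
From mathcomp Require Import all_boot all_order all_algebra all_fingroup all_solvable.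
From mathcomp Require Import zify.
Import GRing.Theory.
Local Open Scope ring_scope.

Lemma kill_vec (O : idomainType) (V : lmodType O) (z : O) (x : V) (m : nat) :
  z ^+ m = 1 -> z != 1 -> (m%:R : O) \is a GRing.unit -> z *: x = x -> x = 0.
Proof.
move=> zm z1 mu zx.
have s0 : \sum_(i < m) z ^+ i = 0.
  apply/eqP; move: (subrX1 z m); rewrite zm subrr => /esym/eqP.
  by rewrite mulf_eq0 subr_eq0 (negbTE z1).
have zk : forall k, z ^+ k *: x = x.
  by elim=> [|k IH]; rewrite ?scale1r // exprSr -scalerA zx.
have : (m%:R : O) *: x = 0.
  have -> : (m%:R : O) *: x = \sum_(i < m) x.
    by rewrite sumr_const card_ord scaler_nat.
  transitivity (\sum_(i < m) z ^+ i *: x); first by apply: eq_bigr => i _; rewrite zk.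
  by rewrite -scaler_suml s0 scale0r.
move=> h; by rewrite -[x]scale1r -(mulVr mu) -scalerA h scaler0.
Qed.

Lemma kill_sum (O : idomainType) (V : lmodType O) (gT : finGroupType)
  (chi : gT -> O) (F : gT -> V) (c : gT) :
  (forall a, chi a \is a GRing.unit) ->
  (forall a b, chi (a * b)%g = chi a * chi b) ->
  chi c != chi 1%g -> (#|gT|%:R : O) \is a GRing.unit ->
  (forall a, F (c * a)%g = F a) ->
  \sum_a (chi a)^-1 *: F a = 0.
Proof.
move=> cu cM cne mu Fc.
have c1 : chi 1%g = 1.
  apply: (mulrI (cu 1%g)); by rewrite mulr1 -cM mulg1.
have cX : forall k, chi (c ^+ k)%g = chi c ^+ k.
  by elim=> [|k IH]; rewrite ?expg0 ?expr0 // expgS exprS cM IH.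
apply: (@kill_vec O V (chi c)^-1 _ #|gT|) => //.
- rewrite exprVn -cX -cardsT expg_cardG ?in_setT //.
  by rewrite c1 invr1.
- apply: contra cne => /eqP h; apply/eqP; by rewrite c1 -[chi c]invrK h invr1.
- rewrite [RHS](reindex_inj (mulgI c)) scaler_sumr /=.
  apply: eq_bigr => a _; rewrite Fc scalerA cM invrM ?cu //.
  by rewrite mulrC.
Qed.
Local Open Scope nat_scope.
Lemma lift_coprime (N L x : nat) : 0 < N -> coprime x L ->
  exists y, (y = x %[mod L]) /\ coprime y N.
Proof.
move=> N0 cxL.
pose k := \prod_(q <- primes N | ~~ (q %| x)) q.
exists (x + L * k); split; first by rewrite addnC mulnC modnMDl.
apply/negPn/negP => ncop.
have G1 : 1 < gcdn (x + L * k) N.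
  rewrite ltn_neqAle eq_sym ncop /= gcdn_gt0 N0 orbT //.
set G := gcdn _ _ in G1.
have qP := pdiv_prime G1.
have qd := pdiv_dvd G.
set q := pdiv G in qP qd.
have qy : q %| x + L * k by apply: dvdn_trans qd (dvdn_gcdl _ _).
have qN : q %| N by apply: dvdn_trans qd (dvdn_gcdr _ _).
case qx: (q %| x).
- move: qy; rewrite dvdn_addr // Euclid_dvdM // => /orP [qL | qk].
  + have : q %| gcdn x L by rewrite dvdn_gcd qx qL.
    rewrite (eqP cxL) dvdn1 => /eqP q1; by rewrite q1 in qP.
  + move: qk; rewrite Euclid_dvd_prod // big_has_cond => /hasP [q' q'P /andP [/= nq'x qq']].
    have pq' : prime q'. by move: q'P; rewrite mem_primes => /andP [].
    move: qq'; rewrite dvdn_prime2 // => /eqP qq'.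
    by rewrite -qq' qx in nq'x.
- have qk : q %| k.
    rewrite Euclid_dvd_prod // big_has_cond; apply/hasP; exists q.
      by rewrite mem_primes qP N0 qN.
    by rewrite /= qx dvdnn.
  move: qy; rewrite dvdn_addl ?qx //; exact: dvdn_mull.
Qed.
Local Open Scope ring_scope.
Lemma unit_coprime n (a : {unit 'Z_(n.+2)}) : coprime n.+2 (val (val a)).
Proof. by move: (valP a); rewrite -[X in X \is a _]natr_Zp unitZpE. Qed.

Lemma vmul n (u v : {unit 'Z_(n.+2)}) :
  val (val (u * v)%g) = (val (val u) * val (val v) %% n.+2)%N.
Proof. by []. Qed.

Lemma triv_gcd n (O : nzRingType) (chi : {unit 'Z_(n.+2)} -> O) (d1 d2 : nat) :
  (forall a b, chi (a * b)%g = chi a * chi b) ->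
  (d1 %| n.+2)%N -> (d2 %| n.+2)%N ->
  char_trivial_mod chi d1 -> char_trivial_mod chi d2 ->
  char_trivial_mod chi (gcdn d1 d2).
Proof.
move=> cM d1N d2N /forallP t1 /forallP t2.
apply/forallP => a; apply/implyP => ha.
set e := gcdn d1 d2 in ha.
set va := val (val a) in ha.
have d1p : (0 < d1)%N by apply: dvdn_gt0 d1N.
have d2p : (0 < d2)%N by apply: dvdn_gt0 d2N.
have cva : coprime n.+2 va by apply: unit_coprime.
have va1 : (1 <= va)%N.
  case: (posnP va) cva => // ->; by rewrite /coprime gcdn0.
have : (e %| va - 1)%N by rewrite -eqn_mod_dvd.
move=> /dvdnP [t ht].
have [j _ /dvdnP [m hm]] := Bezoutl d2 d1p.
pose x := (va + t * (j * d2))%N.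
have x1 : (x = 1 %[mod d1])%N.
  have -> : x = (t * m * d1 + 1)%N.
    rewrite /x -mulnA -hm; fold e; nia.
  by rewrite modnMDl.
have x2 : (x = va %[mod d2])%N by rewrite /x addnC mulnA modnMDl.
have cx : coprime x (d1 * d2).
  have cx1 : coprime x d1 by rewrite /coprime -gcdn_modl x1 gcdn_modl gcd1n.
  have cx2 : coprime x d2.
    rewrite /coprime -gcdn_modl x2 gcdn_modl -/(coprime va d2).
    apply: coprime_dvdr d2N _; by rewrite coprime_sym.
  by rewrite coprimeMr cx1 cx2.
have [y [yx cy]] := @lift_coprime n.+2 _ _ (ltn0Sn n.+1) cx.
have bu : (y%:R : 'Z_(n.+2)) \is a GRing.unit by rewrite unitZpE // coprime_sym.
pose b := FinRing.Unit bu.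
have vb : val (val b) = (y %% n.+2)%N by rewrite /= Zp_nat.
have b1 : (val (val b) = 1 %[mod d1])%N.
  rewrite vb modn_dvdm // -(modn_dvdm _ (dvdn_mulr d2 (dvdnn d1))) yx.
  by rewrite modn_dvdm ?dvdn_mulr.
have b2 : (val (val b) = va %[mod d2])%N.
  rewrite vb modn_dvdm // -(modn_dvdm _ (dvdn_mull d1 (dvdnn d2))) yx.
  by rewrite modn_dvdm ?dvdn_mull.
pose c := (b^-1 * a)%g.
have c2 : (val (val c) = 1 %[mod d2])%N.
  have h1 : (val (val (b^-1 * b)%g) = 1)%N by rewrite mulVg.
  rewrite /c vmul modn_dvdm //.
  have -> : ((val (val b^-1%g) * va) %% d2 = (val (val b^-1%g) * val (val b)) %% d2)%N.
    by rewrite -modnMmr -b2 modnMmr.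
  by rewrite -(modn_dvdm _ d2N) -vmul h1.
have -> : a = (b * c)%g by rewrite /c mulKVg.
rewrite cM (eqP (implyP (t1 b) (introT eqP b1))).
rewrite (eqP (implyP (t2 c) (introT eqP c2))).
by rewrite -cM mulg1.
Qed.

Lemma bigmin_le (I : eqType) (r : seq I) (P : pred I) (F : I -> nat) M i :
  i \in r -> P i -> (\big[minn/M]_(j <- r | P j) F j <= F i)%N.
Proof.
elim: r => [//|x r IH]; rewrite in_cons big_cons => /orP [/eqP -> | ir] Pi.
- by rewrite Pi geq_minl.
- case: (P x); last exact: IH.
  exact: leq_trans (geq_minr _ _) (IH ir Pi).
Qed.

Lemma conductor_dvd n (O : nzRingType) (chi : {unit 'Z_(n.+2)} -> O) (d : nat) :
  (forall a b, chi (a * b)%g = chi a * chi b) ->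
  (0 < d)%N -> (d %| n.+2)%N -> char_trivial_mod chi d ->
  (conductor chi %| d)%N.
Proof.
move=> cM d0 dN td.
set f := conductor chi.
pose P x := (x == n.+2) || [&& (0 < x)%N, (x %| n.+2)%N & char_trivial_mod chi x].
have Pf : P f.
  rewrite /f /conductor; apply: (big_ind P).
  - by rewrite /P eqxx.
  - move=> x y Px Py; case: (leqP x y) => h.
    + by [].
    + by [].
  - by move=> i /andP [/andP [i0 iN] ti]; rewrite /P i0 iN ti orbT.
have fmin : forall d', (0 < d')%N -> (d' %| n.+2)%N -> char_trivial_mod chi d' ->
    (f <= d')%N.
  move=> d' d'0 d'N td'.
  have lt : (d' < n.+3)%N by rewrite ltnS; apply: dvdn_leq.
  rewrite /f /conductor.
  apply: (@bigmin_le _ _ _ (fun i : 'I_n.+3 => (i : nat)) _ (Ordinal lt)).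
    by rewrite mem_index_enum.
  by rewrite /= d'0 d'N td'.
have dle : (d <= n.+2)%N by apply: dvdn_leq.
case/orP: Pf => [/eqP fN | /and3P [f0 fN tf]].
- have h := fmin d d0 dN td.
  have dN' : d = f by apply/eqP; rewrite eqn_leq h andbT fN dle.
  by rewrite dN'.
- have e0 : (0 < gcdn f d)%N by rewrite gcdn_gt0 f0.
  have eN : (gcdn f d %| n.+2)%N by apply: dvdn_trans (dvdn_gcdl _ _) fN.
  have te := @triv_gcd n O chi f d cM fN dN tf td.
  have h1 := fmin _ e0 eN te.
  have h2 : (gcdn f d <= f)%N by apply: dvdn_leq f0 (dvdn_gcdl _ _).
  have -> : f = gcdn f d by apply/eqP; rewrite eqn_leq h1 h2.
  exact: dvdn_gcdr.
Qed.
Lemma scal_mod n g (c : 'Z_(n.+2)) : (g %| n.+2)%N ->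
  (val c %% (n.+2 %/ g) = 1 %% (n.+2 %/ g))%N -> g%:R * c = g%:R.
Proof.
move=> gN hc.
have g0 : (0 < g)%N by apply: dvdn_gt0 gN.
apply: val_inj.
rewrite /= Zp_nat /= modnMml.
have NE : n.+2 = (g * (n.+2 %/ g))%N by rewrite mulnC divnK.
have key : forall m, ((g * m) %% n.+2 = g * (m %% (n.+2 %/ g)))%N.
  by move=> m; rewrite muln_modr -NE.
have k1 := key (val c); have k2 := key 1%N.
rewrite hc -k2 muln1 in k1.
exact: k1.
Qed.

Lemma uvalM n (c a : {unit 'Z_(n.+2)}) : val (c * a)%g = val c * val a.
Proof. by []. Qed.

Lemma div_pos_dvd N g : (0 < N)%N -> (g %| N)%N -> (0 < N %/ g)%N && (N %/ g %| N)%N.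
Proof.
move=> N0 gN; have g0 : (0 < g)%N by apply: dvdn_gt0 gN.
rewrite divn_gt0 // dvdn_leq //=.
apply/dvdnP; exists g; by rewrite mulnC divnK.
Qed.

Theorem lemma2p9
  (N p M : nat)
  (Hp : prime p) (Hpodd : odd p) (HM : (0 < M)%N)
  (HpM : ~~ (p %| M * totient M)%N)
  (HN : N = M \/ N = (M * p)%N) (HN1 : (1 < N)%N)
  (O : idomainType)
  (HOp : forall n : nat, coprime n p -> (n%:R : O) \is a GRing.unit)
  (HOmu : exists z : O, (totient N).-primitive_root z)
  (V : lmodType O) (sym : 'Z_N -> 'Z_N -> V)
  (act : {unit 'Z_N} -> {linear V -> V})
  (Hspan : forall x : V, exists c : {ffun 'Z_N * 'Z_N -> O},
      x = \sum_(uv : 'Z_N * 'Z_N | unimod uv.1 uv.2) c uv *: sym uv.1 uv.2)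
  (Hneg : forall u v : 'Z_N, unimod u v -> sym u v = sym (- u) (- v))
  (Hrot : forall u v : 'Z_N, unimod u v -> sym u v = - sym (- v) u)
  (Hman : forall u v : 'Z_N, unimod u v ->
      sym u v = sym u (u + v) + sym (u + v) v)
  (Hact : forall (a : {unit 'Z_N}) (u v : 'Z_N), unimod u v ->
      act a (sym u v) = sym (val a * u) (val a * v))
  (Hact1 : forall x, act 1%g x = x)
  (HactM : forall (a b : {unit 'Z_N}) x, act (a * b)%g x = act a (act b x))
  (theta : {unit 'Z_N} -> O) (Htheta : is_character theta)
  (Htheta1 : forall a : {unit 'Z_N}, val a = -1 -> theta a = 1)
  (g h : nat) (Hg : (g %| N)%N) (Hh : (h %| N)%N) (Hgh : coprime g h)
  (chi : {unit 'Z_N} -> O) (Hchi : is_character chi)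
  (psi : {unit 'Z_N} -> O) (Hpsi : forall a, psi a = theta a * (chi a)^-1) :
  alpha sym g h chi psi != 0 ->
  (conductor chi %| N %/ g)%N && (conductor psi %| N %/ h)%N.
Proof.
move=> Hal.
destruct N as [|[|n]]; [by [] | by [] | ].
have mu : (#|{: {unit 'Z_(n.+2)}}|%:R : O) \is a GRing.unit.
  apply: HOp; have := card_units_Zp (ltn0Sn n.+1); rewrite /units_Zp cardsT => ->.
  case: HN => HNM; rewrite HNM.
  - rewrite coprime_sym prime_coprime //; apply: contra HpM; exact: dvdn_mull.
  - have pM : ~~ (p %| M)%N by apply: contra HpM; exact: dvdn_mulr.
    rewrite totient_coprime; last by rewrite coprime_sym prime_coprime.
    rewrite (totient_prime Hp) coprimeMl; apply/andP; split.
    + rewrite coprime_sym prime_coprime //; apply: contra HpM; exact: dvdn_mull.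
    + have hp1 := prime_gt1 Hp.
      rewrite coprime_sym prime_coprime //; apply/negP => hd.
      have := dvdn_leq (_ : 0 < p.-1)%N hd; lia.
case: Hchi => cu cM.
case: Htheta => tu tM.
have pu : forall a, psi a \is a GRing.unit.
  by move=> a; rewrite Hpsi unitrM tu unitrV cu.
have pM : forall a b, psi (a * b)%g = psi a * psi b.
  move=> a b; rewrite !Hpsi tM cM invrM ?cu //.
  by rewrite [(chi b)^-1 * _]mulrC mulrACA.
have E1 : alpha sym g h chi psi = (((totient n.+2)%:R : O) ^+ 2)^-1 *: \sum_a (chi a)^-1 *:
    \sum_b (psi b)^-1 *: sym (g%:R * val a) (h%:R * val b).
  rewrite /alpha; congr (_ *: _); apply: eq_bigr => a _.
  rewrite scaler_sumr; apply: eq_bigr => b _; by rewrite scalerA.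
have E2 : alpha sym g h chi psi = (((totient n.+2)%:R : O) ^+ 2)^-1 *: \sum_b (psi b)^-1 *:
    \sum_a (chi a)^-1 *: sym (g%:R * val a) (h%:R * val b).
  rewrite /alpha exchange_big; congr (_ *: _); apply: eq_bigr => b _.
  rewrite scaler_sumr; apply: eq_bigr => a _; by rewrite scalerA mulrC.
have tchi : char_trivial_mod chi (n.+2 %/ g).
  apply/forallP => c; apply/implyP => hc; apply/negPn/negP => hne.
  move/negP: Hal; apply; apply/eqP.
  rewrite E1 (@kill_sum O V _ chi
    (fun a => \sum_b (psi b)^-1 *: sym (g%:R * val a) (h%:R * val b)) c cu cM hne mu)
    ?scaler0 //.
  move=> a; apply: eq_bigr => b _.
  by rewrite uvalM mulrA (@scal_mod n g (val c) Hg (eqP hc)).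
have tpsi : char_trivial_mod psi (n.+2 %/ h).
  apply/forallP => c; apply/implyP => hc; apply/negPn/negP => hne.
  move/negP: Hal; apply; apply/eqP.
  rewrite E2 (@kill_sum O V _ psi
    (fun b => \sum_a (chi a)^-1 *: sym (g%:R * val a) (h%:R * val b)) c pu pM hne mu)
    ?scaler0 //.
  move=> b; apply: eq_bigr => a _.
  by rewrite uvalM mulrA (@scal_mod n h (val c) Hh (eqP hc)).
have [g1 g2] := andP (@div_pos_dvd n.+2 g (ltn0Sn n.+1) Hg).
have [h1 h2] := andP (@div_pos_dvd n.+2 h (ltn0Sn n.+1) Hh).
by rewrite (@conductor_dvd n O chi _ cM g1 g2 tchi) (@conductor_dvd n O psi _ pM h1 h2 tpsi).
Qed.
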